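(* Let $R$ be a ring and $G$ a group. If the group ring $RG$ is a DT ring, then $R$ is a DT ring.
   Context: All rings are associative with identity; $U(R)$ is the group of units. $\Delta(R)=\{x\in R: x+u\in U(R)\text{ for all }u\in U(R)\}$. $\mathrm{Tr}(R)=\{x\in R: x^3=x\}$. A ring $R$ is a DT ring if every $r\in R$ can be written $r=e+d$ with $e\in\mathrm{Tr}(R)$ and $d\in\Delta(R)$. $RG$ denotes the group ring. *)

(* Defs.v *)
From HB Require Import structures.
From mathcomp Require Import all_boot all_algebra.
From mathcomp Require Import boolp classical_sets cardinality fsbigop.

Set Implicit Arguments.
Unset Strict Implicit.
Unset Printing Implicit Defensive.

Import GRing.Theory.
Local Open Scope ring_scope.
Local Open Scope classical_set_scope.

(* For an honest ring type
   [inR] is the trivial predicate; for the group ring it is "finitely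
   supported".                                                          *)
Section DTops.
Variables (T : Type) (inR : T -> Prop) (add mul : T -> T -> T) (one : T).

Definition unit_ops (u : T) : Prop :=
  exists v, inR v /\ mul u v = one /\ mul v u = one.

Definition Delta_ops (x : T) : Prop :=
  inR x /\ forall u, inR u -> unit_ops u -> unit_ops (add x u).

Definition Tr_ops (x : T) : Prop := inR x /\ mul x (mul x x) = x.

Definition DT_ops : Prop :=
  forall r, inR r -> exists e d, Tr_ops e /\ Delta_ops d /\ r = add e d.
End DTops.

(* A ring R (associative, with identity; the zero ring is allowed). *)
Definition DT_ring (R : pzRingType) : Prop :=
  @DT_ops R (fun _ => True) +%R *%R 1.

Section GroupRing.
Variables (R : pzRingType) (G : groupType).

Definition gr_fin_supp (f : G -> R) : Prop := finite_set [set g | f g != 0].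

Definition gr_add (f h : G -> R) : G -> R := fun g => f g + h g.

Definition gr_mul (f h : G -> R) : G -> R :=
  fun g => \sum_(x \in [set: G]) f x * h (monoid.mul (monoid.inv x) g).

Definition gr_one : G -> R := fun g => if g == monoid.one then 1 else 0.

Definition DT_group_ring : Prop :=
  @DT_ops (G -> R) gr_fin_supp gr_add gr_mul gr_one.
End GroupRing.

(* Main.v *)
Require Import Defs.
From HB Require Import structures.
From mathcomp Require Import all_boot all_algebra.
From mathcomp Require Import boolp classical_sets cardinality fsbigop.
From mathcomp Require Import finmap.

Set Implicit Arguments.
Unset Strict Implicit.
Unset Printing Implicit Defensive.
Import GRing.Theory.

Section Aux.
Local Open Scope ring_scope.
Local Open Scope classical_set_scope.
Variables (R : pzRingType) (G : groupType).

Definition eps (f : G -> R) : R := \sum_(x \in [set: G]) f x.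
Definition iota_r (r : R) : G -> R := fun g => if g == monoid.one then r else 0.

Lemma epsE (f : G -> R) (S : set G) : finite_set S ->
  (forall g, ~ S g -> f g = 0) -> eps f = \sum_(x <- fset_set S) f x.
Proof.
move=> fS H; apply: fsbigTE => i; rewrite in_fset_set // => Hi; apply: H.
by move=> Si; move/negP: Hi; apply; apply/mem_set.
Qed.

Lemma nz_supp (f : G -> R) g : ~ (f g != 0) -> f g = 0.
Proof. by move/negP/negPn/eqP. Qed.

Lemma fin_iota r : gr_fin_supp (iota_r r).
Proof.
apply: (sub_finite_set (B := [set monoid.one])); last exact: finite_set1.
move=> g /=; rewrite /iota_r; case: ifP => [/eqP //|_]; by rewrite eqxx.
Qed.

Lemma eps_single (f : G -> R) : (forall g, g != monoid.one -> f g = 0) ->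
  eps f = f monoid.one.
Proof.
move=> H; rewrite /eps (fsbigTE [fset monoid.one]%fset).
  by rewrite big_seq_fset1.
by move=> i; rewrite inE => /H.
Qed.

Lemma eps_iota r : eps (iota_r r) = r.
Proof.
rewrite eps_single /iota_r ?eqxx // => g /negbTE ->; done.
Qed.

Lemma fin_add (f h : G -> R) : gr_fin_supp f -> gr_fin_supp h -> gr_fin_supp (gr_add f h).
Proof.
move=> ff fh; apply: (sub_finite_set (B := [set g | f g != 0] `|` [set g | h g != 0])).
  move=> g /=; rewrite /gr_add => Hg; apply: contrapT => /not_orP[/nz_supp H1 /nz_supp H2].
  by move/eqP: Hg; apply; rewrite H1 H2 addr0.
by rewrite finite_setU.
Qed.

Lemma eps_add (f h : G -> R) : gr_fin_supp f -> gr_fin_supp h ->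
  eps (gr_add f h) = eps f + eps h.
Proof.
move=> ff fh; have fU : finite_set ([set g | f g != 0] `|` [set g | h g != 0]).
  by rewrite finite_setU.
rewrite (epsE fU); last first.
  by move=> g /not_orP[/nz_supp H1 /nz_supp H2]; rewrite /gr_add H1 H2 addr0.
rewrite big_split /= -(epsE (f := f) fU); last by move=> g /not_orP[/nz_supp H1 _].
by rewrite -(epsE (f := h) fU) //; move=> g /not_orP[_ /nz_supp H2].
Qed.

Definition prodset (A B : set G) : set G :=
  [set monoid.mul p.1 p.2 | p in A `*` B].

Lemma fin_prodset A B : finite_set A -> finite_set B -> finite_set (prodset A B).
Proof. by move=> fA fB; apply: finite_image; apply: finite_setX. Qed.

Lemma mul_out (f h : G -> R) g : ~ prodset [set g | f g != 0] [set g | h g != 0] g ->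
  gr_mul f h g = 0.
Proof.
move=> Hg; rewrite /gr_mul fsbig1 // => x _.
have [fx0|fxn] := eqVneq (f x) 0; first by rewrite fx0 mul0r.
have [hx0|hxn] := eqVneq (h (monoid.mul (monoid.inv x) g)) 0; first by rewrite hx0 mulr0.
exfalso; apply: Hg; exists (x, monoid.mul (monoid.inv x) g) => //=.
by rewrite monoid.mulVKg.
Qed.

Lemma fin_mul (f h : G -> R) : gr_fin_supp f -> gr_fin_supp h -> gr_fin_supp (gr_mul f h).
Proof.
move=> ff fh; apply: (sub_finite_set (B := prodset [set g | f g != 0] [set g | h g != 0])).
  move=> g /= Hg; apply: contrapT => Hn; move/eqP: Hg; apply; exact: mul_out.
exact: fin_prodset.
Qed.

Lemma eps_mul (f h : G -> R) : gr_fin_supp f -> gr_fin_supp h ->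
  eps (gr_mul f h) = eps f * eps h.
Proof.
move=> ff fh.
set A := [set g | f g != 0]; set B := [set g | h g != 0].
have fC := fin_prodset ff fh.
rewrite (epsE fC); last by move=> g; apply: mul_out.
have E1 g : gr_mul f h g =
    \sum_(x <- fset_set A) f x * h (monoid.mul (monoid.inv x) g).
  by rewrite /gr_mul -/(eps _) (epsE ff) // => x /nz_supp ->; rewrite mul0r.
under eq_bigr do rewrite E1.
rewrite exchange_big /= (epsE ff); last by move=> g /nz_supp.
rewrite big_distrl /=; apply: eq_big_seq => x; rewrite in_fset_set // mem_setE => Ax.
rewrite -big_distrr /=; congr (_ * _).
rewrite -(epsE (f := fun g => h (monoid.mul (monoid.inv x) g)) fC); last first.
  move=> g Hg; apply: nz_supp => Hh; apply: Hg.
  by exists (x, monoid.mul (monoid.inv x) g) => //=; rewrite monoid.mulVKg.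
rewrite /eps (reindex_fsbigT (fun g => monoid.mul (monoid.inv x) g) h) //.
exists (fun y => monoid.mul x y) => y; [exact: monoid.mulVKg | exact: monoid.mulKg].
Qed.

Lemma iota_unit u v : u * v = 1 -> gr_mul (iota_r u) (iota_r v) = @gr_one R G.
Proof.
move=> uv; apply: funext => g; rewrite /gr_mul -/(eps _) eps_single.
  rewrite /iota_r eqxx monoid.invg1 monoid.mul1g /gr_one.
  by case: eqP => _; rewrite ?uv ?mulr0.
by move=> x /negbTE Hx; rewrite /iota_r Hx mul0r.
Qed.

End Aux.

Theorem lemma3p6 (R : pzRingType) (G : groupType) :
  DT_group_ring R G -> DT_ring R.
Proof.
move=> HG r _.
have [e [d [[eS eT] [[dS dD] Er]]]] := HG (@iota_r R G r) (@fin_iota R G r).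
exists (eps e), (eps d); split; [split=>//| split; [split=>// | ]].
- by rewrite -(eps_mul eS eS) -(eps_mul eS (fin_mul eS eS)) eT.
- move=> u _ [v [_ [uv vu]]].
  have [w [wS [h1 h2]]] := dD (@iota_r R G u) (@fin_iota R G u)
     (ex_intro _ (@iota_r R G v) (conj (@fin_iota R G v) (conj (@iota_unit R G u v uv) (@iota_unit R G v u vu)))).
  have fdu := fin_add dS (@fin_iota R G u).
  exists (eps w); split => //.
  rewrite -[u](@eps_iota R G) -(eps_add dS (@fin_iota R G u)); split.
    by rewrite -(eps_mul fdu wS) h1 /gr_one -/(@iota_r R G 1) eps_iota.
  by rewrite -(eps_mul wS fdu) h2 /gr_one -/(@iota_r R G 1) eps_iota.
- by rewrite -(eps_add eS dS) -Er eps_iota.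
Qed.
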